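(* Let $n\ge 1$ and let $G$ be the graph on the $3n+1$ vertices $c, v_{i,1}, v_{i,2}, v_{i,3}$ ($1\le i\le n$) in which two distinct vertices are adjacent except exactly for the pairs $\{c,v_{i,1}\}$, $\{v_{i,1},v_{i,2}\}$, $\{v_{i,2},v_{i,3}\}$ for $1\le i\le n$ (i.e. $G$ is the complement of a star with $n$ branches of $3$ edges each). Then $\tau(G)=3n-1$, while a minimum connecting transition set of $G$ has size exactly $2n$.
   Context: All graphs are finite, simple and undirected. $G[X]$ denotes the subgraph induced by $X\subseteq V(G)$. The complement $\bar G$ has vertex set $V(G)$ and an edge $xy$ ($x\ne y$) iff $xy\notin E(G)$. A co-connected component of $G$ is (the vertex set of) a connected component of $\bar G$. For a graph $G$, $\tau(G)=\sum_{C}(|C|-2)$ if $G[C]$ connected, $(|C|-1)$ otherwise, the sum over co-connected components $C$ with $|C|\ge 2$. A transition of a graph $G$ is an unordered pair $\{ab,bc\}$ of two distinct edges of $G$ sharing the vertex $b$ (so $a\neq c$); it is written $abc$. A walk in $G$ is a sequence $(v_1,\dots,v_k)$ of vertices with $v_iv_{i+1}\in E(G)$ for all $i\le k-1$. For a set $T$ of transitions of $G$, a walk $(v_1,\dots,v_k)$ is $T$-compatible if for every $i\in[1,k-2]$, either $v_i=v_{i+2}$ or $v_iv_{i+1}v_{i+2}\in T$. $T$ is a connecting transition set of $G$ if for all vertices $u,v$ there is a $T$-compatible walk from $u$ to $v$; a minimum one has minimum cardinality. *)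

(* Defs.v *)
From mathcomp Require Import all_boot.
Set Implicit Arguments. Unset Strict Implicit. Unset Printing Implicit Defensive.

Section Graphs.
Variable T : finType.
(* a simple graph is a symmetric irreflexive relation e on T *)
Variable e : rel T.

Definition complg : rel T := fun x y => (x != y) && ~~ e x y.

Definition cocomp (x : T) : {set T} := [set y | connect complg x y].
Definition cocomps : {set {set T}} := [set cocomp x | x in T].

Definition induced (C : {set T}) : rel T :=
  fun x y => [&& e x y, x \in C & y \in C].
Definition induced_connected (C : {set T}) : Prop :=
  forall x y, x \in C -> y \in C -> connect (induced C) x y.

Definition tau_term (C : {set T}) : nat :=
  if [forall x in C, forall y in C, connect (induced C) x y]
  then #|C| - 2 else #|C| - 1.

Definition tau : nat := \sum_(C in cocomps | 2 <= #|C|) tau_term C.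

(* A transition {ab, bc} (a <> c) is encoded by its middle vertex b together
   with the unordered pair {a, c}; this encoding is bijective for simple graphs. *)
Definition is_transition (t : T * {set T}) : bool :=
  (#|t.2| == 2) && [forall x in t.2, e t.1 x].

Definition transition_set (Tr : {set T * {set T}}) : Prop :=
  forall t, t \in Tr -> is_transition t.

Definition compatible (Tr : {set T * {set T}}) (w : seq T) : Prop :=
  forall i x0, i.+2 < size w ->
    nth x0 w i = nth x0 w i.+2 \/
    (nth x0 w i.+1, [set nth x0 w i; nth x0 w i.+2]) \in Tr.

Definition connecting (Tr : {set T * {set T}}) : Prop :=
  forall u v : T, exists p : seq T,
    [/\ path e u p, last u p = v & compatible Tr (u :: p)].

Definition min_connecting_size (m : nat) : Prop :=
  (exists Tr, [/\ transition_set Tr, connecting Tr & #|Tr| = m]) /\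
  (forall Tr, transition_set Tr -> connecting Tr -> m <= #|Tr|).

End Graphs.

(* Vertices: None = c, Some (i, j) = v_{i+1, j+1}. *)
Definition star_vertex (n : nat) : finType := option ('I_n * 'I_3).

Definition star_nonedge (n : nat) (x y : star_vertex n) : bool :=
  match x, y with
  | None, Some (_, j) => (j : nat) == 0
  | Some (_, j), None => (j : nat) == 0
  | Some (i, j), Some (i', j') =>
      (i == i') && (((j : nat).+1 == j') || ((j' : nat).+1 == j))
  | None, None => false
  end.

Definition costar (n : nat) : rel (star_vertex n) :=
  fun x y => (x != y) && ~~ star_nonedge x y.

(* Main.v *)
Require Import Defs.
From mathcomp Require Import all_boot.
From mathcomp Require Import zify.
Set Implicit Arguments. Unset Strict Implicit. Unset Printing Implicit Defensive.

Section Gen.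
Variables (T : finType) (e : rel T).

Definition isE (x : {set T}) : bool := [exists a, exists b, (x == [set a; b]) && e a b].
Definition Vl (lab : {set T} -> {set T}) (l : {set T}) : {set T} :=
  \bigcup_(x | isE x && (lab x == l)) x.
Definition Psi lab := \sum_(l : {set T}) (#|Vl lab l| - 2).

Lemma isE2 a b : e a b -> isE [set a; b].
Proof. by move=> h; apply/existsP; exists a; apply/existsP; exists b; rewrite eqxx h. Qed.

Lemma Psi_id : Psi id = 0.
Proof.
apply: big1 => l _; apply/eqP; rewrite subn_eq0.
case: (boolP (isE l)) => [/existsP[a /existsP[b /andP[/eqP El _]]]|nE].
  have sub : Vl id l \subset l.
    by apply/bigcupsP => x /andP[_ /eqP ->].
  apply: leq_trans (subset_leq_card sub) _.
  by rewrite El cards2; case: (a != b).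
rewrite /Vl big_pred0 ?cards0 // => x.
by case: eqP => [->|_]; rewrite ?andbF ?andbT // (negbTE nE).
Qed.

Lemma Vl_ext lab lab' : lab =1 lab' -> Vl lab =1 Vl lab'.
Proof. by move=> h l; apply: eq_bigl => x; rewrite h. Qed.

Lemma Psi_ext lab lab' : lab =1 lab' -> Psi lab = Psi lab'.
Proof. by move=> h; apply: eq_bigr => l _; rewrite (Vl_ext h). Qed.

Lemma sub_Vl lab x : isE x -> x \subset Vl lab (lab x).
Proof. by move=> h; apply: (bigcup_sup x); rewrite h eqxx. Qed.

Definition merge (lab : {set T} -> {set T}) (n1 n2 : {set T}) : {set T} -> {set T} :=
  fun x => if lab x == lab n1 then lab n2 else lab x.

Lemma Psi_merge lab n1 n2 b : isE n1 -> isE n2 -> b \in n1 -> b \in n2 ->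
  Psi (merge lab n1 n2) <= (Psi lab).+1.
Proof.
move=> E1 E2 b1 b2.
set l1 := lab n1; set l2 := lab n2.
have [el|nel] := eqVneq l1 l2.
  rewrite (@Psi_ext _ lab) // => x; rewrite /merge.
  by case: eqP => [->|].
set f := fun l => #|Vl lab l| - 2.
pose h l := if l == l1 then 0 else if l == l2 then #|Vl lab l1 :|: Vl lab l2| - 2 else f l.
have step : forall l, #|Vl (merge lab n1 n2) l| - 2 <= h l.
  move=> l; rewrite /h; case: eqP => [->|nl1].
    rewrite /Vl big_pred0 ?cards0 // => x; rewrite /merge -/l1 -/l2.
    case: (lab x =P l1) => [_|nx]; first by rewrite [l2 == _]eq_sym (negbTE nel) andbF.
    by move/eqP/negbTE: nx => ->; rewrite andbF.
  case: eqP => [->|nl2].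
    apply: leq_sub2r; apply: subset_leq_card; apply/bigcupsP => x /andP[Ex].
    rewrite /merge -/l1 -/l2; case: (lab x =P l1) => [lx _|_ /eqP lx].
      by apply: subsetU; apply/orP; left; rewrite -lx; apply: sub_Vl.
    by apply: subsetU; apply/orP; right; rewrite -lx; apply: sub_Vl.
  apply: leq_sub2r; apply: subset_leq_card; apply/bigcupsP => x /andP[Ex].
  rewrite /merge -/l1 -/l2; case: (lab x =P l1) => [_ /eqP lx|_ /eqP lx]; first by case: nl2.
  by rewrite -lx; apply: sub_Vl.
rewrite /Psi; apply: leq_trans; first (apply: leq_sum => l _; exact: step).
have nel' : (l2 == l1) = false by rewrite eq_sym (negbTE nel).
rewrite (bigD1 l1) // (bigD1 l2) /=; last by rewrite nel'.
have -> : \sum_l (#|Vl lab l| - 2) = f l1 + (f l2 + \sum_(i | (i != l1) && (i != l2)) f i).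
  by rewrite (bigD1 l1) // (bigD1 l2) /=; last by rewrite nel'.
rewrite {1 2}/h eqxx nel' eqxx add0n.
have -> : \sum_(i | (i != l1) && (i != l2)) h i = \sum_(i | (i != l1) && (i != l2)) f i.
  by apply: eq_bigr => i /andP[/negbTE n1' /negbTE n2']; rewrite /h n1' n2'.
have bV1 : b \in Vl lab l1 by apply: (subsetP (sub_Vl lab E1)).
have bV2 : b \in Vl lab l2 by apply: (subsetP (sub_Vl lab E2)).
have I1 : 0 < #|Vl lab l1 :&: Vl lab l2|.
  by apply/card_gt0P; exists b; rewrite inE bV1 bV2.
have A1 : 0 < #|Vl lab l1| by apply/card_gt0P; exists b.
have A2 : 0 < #|Vl lab l2| by apply/card_gt0P; exists b.
have U := cardsUI (Vl lab l1) (Vl lab l2).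
rewrite /f.
move: I1 A1 A2 U.
set R := \sum_(i | _) _.
set U1 := #|_ :|: _|; set I := #|_ :&: _|; set a1 := #|Vl lab l1|; set a2 := #|Vl lab l2|.
move=> *; lia.
Qed.

Definition pa (t : T * {set T}) : T := odflt t.1 [pick x in t.2].
Definition pc (t : T * {set T}) : T := odflt t.1 [pick x in t.2 :\ pa t].
Definition nd (t : T * {set T}) (x : T) : {set T} := [set t.1; x].

Lemma pa_pc (t : T * {set T}) : #|t.2| = 2 ->
  [/\ pa t \in t.2, pc t \in t.2 & forall x, x \in t.2 -> x = pa t \/ x = pc t].
Proof.
move=> c2.
have Ha : pa t \in t.2.
  rewrite /pa; case: pickP => [a //|H0].
  by move: c2; rewrite (eq_card0 H0).
have c1 : #|t.2 :\ pa t| = 1 by rewrite (cardsD1 (pa t)) Ha in c2; case: c2.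
have Hc : pc t \in t.2 :\ pa t.
  rewrite /pc; case: pickP => [c //|H0].
  by move: c1; rewrite (eq_card0 H0).
split => //; first by move: Hc; rewrite inE => /andP[].
move=> x xt; case: (eqVneq x (pa t)) => [->|nx]; first by left.
right; move/eqP/cards1P: c1 => [z Ez].
have : x \in t.2 :\ pa t by rewrite in_setD1 nx xt.
move: Hc; rewrite Ez !inE => /eqP -> /eqP -> //.
Qed.

Definition stepl (lab : {set T} -> {set T}) (t : T * {set T}) :=
  merge lab (nd t (pa t)) (nd t (pc t)).
Definition labs (s : seq (T * {set T})) : {set T} -> {set T} :=
  foldr (fun t lab => stepl lab t) id s.

Lemma labs_inv s : (forall t, t \in s -> is_transition e t) ->
  Psi (labs s) <= size s /\
  (forall t, t \in s -> forall x y, x \in t.2 -> y \in t.2 ->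
     labs s (nd t x) = labs s (nd t y)).
Proof.
elim: s => [|t s IH] Hs; first by rewrite Psi_id.
have Ht : is_transition e t by apply: Hs; rewrite inE eqxx.
have [Ps Es] := IH (fun t' h => Hs t' (mem_behead (s := t :: s) h)).
move: Ht => /andP[/eqP c2 /forallP Ee].
have [Ha Hc Hx] := pa_pc c2.
have Ea : e t.1 (pa t) by move: (Ee (pa t)); rewrite Ha.
have Ec : e t.1 (pc t) by move: (Ee (pc t)); rewrite Hc.
split.
  rewrite /= /stepl; apply: leq_trans (Psi_merge _ (isE2 Ea) (isE2 Ec) _ _) _.
  - exact: (set21 t.1 (pa t)).
  - exact: (set21 t.1 (pc t)).
  by rewrite ltnS.
move=> t'; rewrite inE => /orP[/eqP ->|t's] x y xt yt.
  have key : forall z, z \in t.2 -> labs (t :: s) (nd t z) = labs s (nd t (pc t)).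
    move=> z /Hx [->|->]; rewrite /= /stepl /merge ?eqxx //.
    by case: ifP.
  by rewrite !key.
by rewrite /= /stepl /merge (Es t' t's x y xt yt).
Qed.

Lemma walk_lab (Tr : {set T * {set T}}) (lab : {set T} -> {set T}) :
  (forall t, t \in Tr -> forall x y, x \in t.2 -> y \in t.2 -> lab (nd t x) = lab (nd t y)) ->
  forall p u w, path e u (w :: p) -> compatible Tr (u :: w :: p) ->
  exists y, lab [set u; w] = lab [set y; last w p] /\ e y (last w p).
Proof.
move=> HT; elim=> [|w' p IH] u w.
  by move=> /= /andP[euw _] _; exists u.
move=> /= /andP[euw pw] C.
have C' : compatible Tr (w :: w' :: p).
  by move=> i x0 hi; apply: (C i.+1 x0).
have [y [Ey ey]] := IH w w' pw C'.
exists y; split => //; rewrite -Ey.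
have [|] := C 0 u isT => /= [->|H]; first by rewrite setUC.
have := HT _ H u w' (set21 _ _) (set22 _ _); rewrite /nd /= setUC => ->.
by [].
Qed.

Lemma coverT (Tr : {set T * {set T}}) : transition_set e Tr -> connecting e Tr ->
  forall u v, u != v -> ~~ e u v ->
  exists l, u \in Vl (labs (enum Tr)) l /\ v \in Vl (labs (enum Tr)) l.
Proof.
move=> TS Co u v nuv neuv.
have [_ Hl] : Psi (labs (enum Tr)) <= size (enum Tr) /\
  (forall t, t \in enum Tr -> forall x y, x \in t.2 -> y \in t.2 ->
     labs (enum Tr) (nd t x) = labs (enum Tr) (nd t y)).
  by apply: labs_inv => t; rewrite mem_enum; apply: TS.
have HT : forall t, t \in Tr -> forall x y, x \in t.2 -> y \in t.2 ->
  labs (enum Tr) (nd t x) = labs (enum Tr) (nd t y).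
  by move=> t; rewrite -mem_enum; apply: Hl.
have [[|w p] [Pp Lp Cp]] := Co u v; first by rewrite -Lp eqxx in nuv.
have [y [Ey ey]] := walk_lab HT Pp Cp.
move: Pp => /= /andP[euw _].
exists (labs (enum Tr) [set u; w]); split.
  by apply: (subsetP (sub_Vl _ (isE2 euw))); rewrite set21.
rewrite Ey; apply: (subsetP (sub_Vl _ (isE2 ey))).
by rewrite /= in Lp; rewrite Lp set22.
Qed.

Lemma Vl_P lab l x : x \in Vl lab l -> exists y, y \in Vl lab l /\ (e x y || e y x).
Proof.
move=> /bigcupP[S /andP[ES /eqP lS] xS].
move: ES => /existsP[a /existsP[b /andP[/eqP Sab eab]]].
have sub := sub_Vl lab (isE2 eab).
rewrite -Sab lS in sub.
move: xS; rewrite Sab !inE => /orP[/eqP ->|/eqP ->].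
  by exists b; rewrite eab; split => //; apply: (subsetP sub); rewrite Sab set22.
by exists a; rewrite eab orbT; split => //; apply: (subsetP sub); rewrite Sab set21.
Qed.

End Gen.

Definition o0 : 'I_3 := @Ordinal 3 0 isT.
Definition o1 : 'I_3 := @Ordinal 3 1 isT.
Definition o2 : 'I_3 := @Ordinal 3 2 isT.
Lemma someE (T : eqType) (a b : T) : (Some a == Some b) = (a == b). Proof. by []. Qed.

Lemma card_ind (T : finType) (S : {set T}) : #|S| = \sum_(v : T) (v \in S).
Proof. by rewrite -sum1_card big_mkcond; apply: eq_bigr => v _; case: (v \in S). Qed.

Section Spec.
Variable n : nat.
Local Notation V := (star_vertex n).

Definition par (v : V) : V :=
  match v with
  | None => None
  | Some (i, j) => if j == o0 then None else if j == o1 then Some (i, o0) else Some (i, o1)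
  end.
Definition depth (v : V) : nat := if v is Some (_, j) then (j : nat).+1 else 0.

Lemma depth_par v : v != None -> depth (par v) < depth v.
Proof. by case: v => [[i [[|[|[|k]]] Hk]]|] //=. Qed.

Lemma par_neq v : v != None -> par v != v.
Proof. by move=> h; apply/eqP => E; move: (depth_par h); rewrite E ltnn. Qed.

Lemma nonedgeE (x y : V) : star_nonedge x y =
  ((y != None) && (x == par y)) || ((x != None) && (y == par x)).
Proof.
case: x => [[i [[|[|[|k]]] Hk]]|]; case: y => [[i' [[|[|[|k']]] Hk']]|] //=;
  rewrite ?someE ?xpair_eqE /= ?andbT ?andbF ?orbF //;
  by rewrite ?(eq_sym i').
Qed.


Lemma costar_irr (x : V) : ~~ costar x x.
Proof. by rewrite /costar eqxx. Qed.

Lemma costar_sym (x y : V) : costar x y = costar y x.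
Proof. by rewrite /costar !nonedgeE eq_sym orbC. Qed.

Lemma nc_par1 (v : V) : v != None -> ~~ costar (par v) v.
Proof. by move=> h; rewrite /costar nonedgeE h eqxx /= andbF. Qed.
Lemma nc_par2 (v : V) : v != None -> ~~ costar v (par v).
Proof. by move=> h; rewrite costar_sym nc_par1. Qed.

Lemma two (W : {set V}) a b x : a \in W -> b \in W -> x \in W -> #|W| <= 2 -> a != b ->
  (x == a) || (x == b).
Proof.
move=> aW bW xW cW ab; apply/negP => H.
have sub : x |: [set a; b] \subset W.
  by apply/subsetP => z; rewrite !inE => /orP[|/orP[]] /eqP->.
have := subset_leq_card sub.
move/negP: H => H.
rewrite cardsU1 cards2 ab !inE H.
by move: cW; lia.
Qed.

Lemma three (W : {set V}) a b c x : a \in W -> b \in W -> c \in W -> x \in W -> #|W| <= 3 ->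
  a != b -> a != c -> b != c -> [|| x == a, x == b | x == c].
Proof.
move=> aW bW cW xW cW3 ab ac bc; apply/negP => H.
have sub : x |: (a |: [set b; c]) \subset W.
  by apply/subsetP => z; rewrite !inE => /orP[|/orP[|/orP[]]] /eqP->.
have := subset_leq_card sub.
move/negP: H => H.
rewrite cardsU1 cardsU1 cards2 bc !inE H (negbTE ab) (negbTE ac).
by move: cW3; lia.
Qed.

Definition Aset (W : {set V}) := [set v in W | (v != None) && (par v \in W)].

Definition PW (W : {set V}) := forall x, x \in W -> exists y, y \in W /\ costar x y.

Lemma A_small2 W u : PW W -> u \in Aset W -> 3 <= #|W|.
Proof.
move=> P; rewrite inE => /andP[uW /andP[uN pW]].
rewrite ltnNge; apply/negP => cW.
have [y [yW cy]] := P u uW.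
have nu : u != par u by rewrite eq_sym par_neq.
case/orP: (two uW pW yW cW nu) cy => /eqP ->.
  by rewrite (negbTE (costar_irr u)).
by rewrite (negbTE (nc_par2 uN)).
Qed.

Lemma bad_chain W u w : PW W -> #|W| <= 3 -> u \in W -> u != None -> w = par u -> w != None ->
  w \in W -> par w \in W -> False.
Proof.
move=> P cW uW uN wu wN wW pwW.
have dw := depth_par wN; have du := depth_par uN; rewrite -wu in du.
have uw : u != w by apply/eqP => E; move: du; rewrite E ltnn.
have upw : u != par w by apply/eqP => E; move: du dw; rewrite E; lia.
have wpw : w != par w by rewrite eq_sym par_neq.
have [y [yW cy]] := P w wW.
case/or3P: (three uW wW pwW yW cW uw upw wpw) cy => /eqP ->.
- by rewrite costar_sym wu (negbTE (nc_par2 uN)).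
- by rewrite (negbTE (costar_irr w)).
- by rewrite (negbTE (nc_par2 wN)).
Qed.

Lemma A_small3 W u w : PW W -> u \in Aset W -> w \in Aset W -> u != w -> 4 <= #|W|.
Proof.
move=> P; rewrite !inE => /andP[uW /andP[uN puW]] /andP[wW /andP[wN pwW]] uw.
rewrite ltnNge; apply/negP => cW.
have [E|nE] := eqVneq w (par u); first exact: (bad_chain P cW uW uN E wN wW pwW).
have [E'|nE'] := eqVneq u (par w); first exact: (bad_chain P cW wW wN E' uN uW puW).
have upu : u != par u by rewrite eq_sym par_neq.
have wpu : w != par u by [].
have := three uW wW puW pwW cW uw upu wpu.
rewrite eq_sym (negbTE nE') /= (negbTE (par_neq wN)) /= => /eqP pe.
have [y [yW cy]] := P (par u) puW.
case/or3P: (three uW wW puW yW cW uw upu wpu) cy => /eqP ->.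
- by rewrite (negbTE (nc_par1 uN)).
- by rewrite -pe (negbTE (nc_par1 wN)).
- by rewrite (negbTE (costar_irr _)).
Qed.

Lemma A_forest W : W != set0 -> #|Aset W| <= #|W| - 1.
Proof.
case/set0Pn => v0 v0W.
case: (arg_minnP depth v0W) => m mW mmin.
have sub : Aset W \subset W :\ m.
  apply/subsetP => x; rewrite !inE => /andP[xW /andP[xN pxW]].
  rewrite xW andbT; apply/eqP => E; subst x.
  by have := mmin _ pxW; rewrite leqNgt depth_par.
apply: leq_trans (subset_leq_card sub) _.
by rewrite (cardsD1 m W) (_ : m \in W = true) // add1n subn1.
Qed.

Lemma eS_bound W : PW W -> 2 * #|Aset W| <= 3 * (#|W| - 2).
Proof.
move=> P.
have [->|W0] := eqVneq W set0.
  rewrite cards0 /=.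
  suff -> : Aset set0 = set0 by rewrite cards0.
  by apply/setP => x; rewrite !inE.
have F := A_forest W0.
case: (leqP 4 #|W|) => c4; first by move: F c4; lia.
case: (posnP #|Aset W|) => [->|A1]; first by [].
case/card_gt0P: A1 => u uA.
have c3 := A_small2 P uA.
suff : #|Aset W| <= 1 by move: c3 c4; lia.
rewrite leqNgt; apply/negP => /card_gt1P [x [y [xA yA xy]]].
by have := A_small3 P xA yA xy; lia.
Qed.


Lemma card_V : #|V| = (3 * n).+1.
Proof. by rewrite card_option card_prod card_ord card_ord mulnC. Qed.

Lemma lower (Tr : {set V * {set V}}) : transition_set (@costar n) Tr -> connecting (@costar n) Tr ->
  2 * n <= #|Tr|.
Proof.
move=> TS Co.
set lab := labs (enum Tr).
have [Ps _] : Psi (@costar n) lab <= size (enum Tr) /\ True.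
  split => //; have [] := @labs_inv _ (@costar n) (enum Tr); last by [].
  by move=> t; rewrite mem_enum; apply: TS.
rewrite -cardE in Ps.
have cov : forall v, v != None -> exists l, v \in Aset (Vl (@costar n) lab l).
  move=> v vN.
  have vp : v != par v by rewrite eq_sym par_neq.
  have [l [h1 h2]] := coverT TS Co vp (nc_par2 vN).
  by exists l; rewrite inE h1 vN h2.
have PWl : forall l, PW (Vl (@costar n) lab l).
  move=> l x xV; have [y [yV]] := Vl_P xV.
  by rewrite [(@costar n) y x]costar_sym orbb => c; exists y.
have S1 : 3 * n <= \sum_(l : {set V}) #|Aset (Vl (@costar n) lab l)|.
  have -> : 3 * n = #|[set~ (None : V)]| by rewrite cardsC1 card_V.
  rewrite card_ind.
  under [X in _ <= X]eq_bigr => l _ do rewrite card_ind.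
  rewrite exchange_big /=.
  apply: leq_sum => v _.
  rewrite !inE; case: (boolP (v == None)) => //= vN.
  have [l hl] := cov v vN.
  by rewrite (bigD1 l) //= hl.
have S2 : \sum_(l : {set V}) 2 * #|Aset (Vl (@costar n) lab l)| <= 3 * #|Tr|.
  apply: leq_trans (leq_mul (leqnn 3) Ps).
  rewrite /Psi big_distrr /=.
  by apply: leq_sum => l _; apply: eS_bound.
rewrite -big_distrr /= in S2.
have S3 := leq_trans (leq_mul (leqnn 2) S1) S2.
by move: S3; rewrite mulnCA leq_pmul2l.
Qed.


Lemma I3P (j : 'I_3) : [\/ j = o0, j = o1 | j = o2].
Proof.
case: j => [[|[|[|k]]] Hk] //.
- by apply: Or31; apply: val_inj.
- by apply: Or32; apply: val_inj.
- by apply: Or33; apply: val_inj.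
Qed.

Definition Tr0 : {set V * {set V}} :=
  [set (Some (i, o2), [set Some (i, o0); None]) | i : 'I_n] :|:
  [set (None, [set Some (i, o2); Some (i, o1)]) | i : 'I_n].

Lemma memA i : (Some (i, o2), [set Some (i, o0); None]) \in Tr0.
Proof. by rewrite inE; apply/orP; left; apply/imsetP; exists i. Qed.
Lemma memA' i : (Some (i, o2), [set None; Some (i, o0)]) \in Tr0.
Proof. by rewrite setUC memA. Qed.
Lemma memB i : (None, [set Some (i, o2); Some (i, o1)]) \in Tr0.
Proof. by rewrite inE; apply/orP; right; apply/imsetP; exists i. Qed.
Lemma memB' i : (None, [set Some (i, o1); Some (i, o2)]) \in Tr0.
Proof. by rewrite setUC memB. Qed.

Ltac simv := rewrite /costar /= ?someE ?xpair_eqE ?eqxx /=.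

Lemma Tr0_card : #|Tr0| = 2 * n.
Proof.
rewrite cardsU !card_imset ?card_ord.
- suff -> : [set (Some (i, o2), [set Some (i, o0); None]) | i : 'I_n] :&:
    [set (None, [set Some (i, o2); Some (i, o1)]) | i : 'I_n] = set0.
    by rewrite cards0 subn0 addnn mul2n.
  apply/setP => t; rewrite !inE.
  apply/negP => /andP[/imsetP[i _ ->] /imsetP[j _]] //.
- move=> i j [] E.
  have : Some (i, o2) \in [set Some (j, o2); Some (j, o1)] by rewrite -E set21.
  by rewrite !inE !someE !xpair_eqE /= eqxx andbT => /orP[/eqP|/andP[/eqP]].
- by move=> i j [->].
Qed.

Lemma Tr0_trans : transition_set (@costar n) Tr0.
Proof.
move=> t; rewrite inE => /orP[/imsetP[i _ ->]|/imsetP[i _ ->]];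
  rewrite /is_transition cards2 /=; simv;
  by apply/forallP => x; apply/implyP; rewrite !inE => /orP[/eqP->|/eqP->]; simv; rewrite ?andbF.
Qed.

Ltac fin := split; [rewrite /= /costar /= ?someE ?xpair_eqE ?eqxx /= ?andbF ?andbT // | by [] |
  move=> [|[|k]] x0 //= _; right; by rewrite ?memA ?memA' ?memB ?memB'].

Lemma Tr0_conn : connecting (@costar n) Tr0.
Proof.
move=> u v.
case: (eqVneq u v) => [<-|uv]; first by exists [::]; split => // i x0.
case: (boolP (costar u v)) => c.
  by exists [:: v]; split => //=; rewrite c.
have ne : star_nonedge u v by move: c; rewrite /costar uv /=; case: (star_nonedge u v).
case: u uv c ne => [[i j]|]; case: v => [[i' j']|] //=.
- move=> _ _ /andP[/eqP <- h].
  case: (I3P j) h => ->; case: (I3P j') => -> //= _.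
  + exists [:: Some (i, o2); None; Some (i, o1)]; fin.
  + exists [:: None; Some (i, o2); Some (i, o0)]; fin.
  + exists [:: None; Some (i, o2)]; fin.
  + exists [:: None; Some (i, o1)]; fin.
- move=> _ _ h; case: (I3P j) h => -> //= _.
  exists [:: Some (i, o2); None]; fin.
- move=> _ _ h; case: (I3P j') h => -> //= _.
  exists [:: Some (i', o2); Some (i', o0)]; fin.
Qed.


Lemma to_root (x : V) : connect (complg (@costar n)) x None.
Proof.
have : forall k (x : V), depth x <= k -> connect (complg (@costar n)) x None.
  elim=> [|k IH] y.
    by case: y => [[i j]|] //= _; exact: connect0.
  case: (eqVneq y None) => [-> _|yN dy]; first exact: connect0.
  apply: connect_trans (IH (par y) _).
    apply: connect1; rewrite /complg (nc_par2 yN) andbT.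
    by rewrite eq_sym par_neq.
  by have := depth_par yN; move: dy; lia.
by move=> /(_ (depth x) x (leqnn _)).
Qed.

Lemma complg_sym : symmetric (complg (@costar n)).
Proof. by move=> x y; rewrite /complg eq_sym costar_sym. Qed.

Lemma cocomps_T : cocomps (@costar n) = [set setT].
Proof.
have cT : forall x, cocomp (@costar n) x = setT.
  move=> x; apply/setP => y; rewrite !inE.
  apply: connect_trans (to_root x) _.
  by rewrite (sym_connect_sym complg_sym); apply: to_root.
apply/setP => C; rewrite !inE; apply/imsetP/eqP => [[x _ ->]|->]; first by rewrite cT.
by exists None => //; rewrite cT.
Qed.

Lemma induced_sym : symmetric (induced (@costar n) setT).
Proof. by move=> x y; rewrite /induced !inE costar_sym. Qed.

Lemma g_root (x : V) : connect (induced (@costar n) setT) x None.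
Proof.
have st : forall a b : V, costar a b -> connect (induced (@costar n) setT) a b.
  by move=> a b h; apply: connect1; rewrite /induced !inE h.
case: x => [[i j]|]; last exact: connect0.
case: (I3P j) => ->.
- apply: connect_trans (st _ (Some (i, o2)) _) (st _ _ _); simv; by rewrite ?andbF.
- by apply: st; simv.
- by apply: st; simv.
Qed.

Lemma tau_val : 0 < n -> tau (@costar n) = 3 * n - 1.
Proof.
move=> hn.
rewrite /tau cocomps_T (big_pred1 setT); last first.
  move=> C; rewrite !inE; case: (C =P setT) => [->|]; rewrite ?andbF //.
  have h : 1 < (3 * n).+1 by lia.
  by rewrite cardsT card_V h.
rewrite /tau_term.
have -> : [forall x in [set: V], forall y in [set: V], connect (induced (@costar n) setT) x y].
  apply/forallP => x; apply/implyP => _; apply/forallP => y; apply/implyP => _.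
  apply: connect_trans (g_root x) _.
  by rewrite (sym_connect_sym induced_sym); apply: g_root.
by rewrite cardsT card_V; lia.
Qed.

End Spec.

Theorem mainTheorem9 (n : nat) (hn : 1 <= n) :
  tau (@costar n) = 3 * n - 1 /\ min_connecting_size (@costar n) (2 * n).
Proof.
split; first exact: tau_val.
split.
  by exists (Tr0 n); split; [exact: Tr0_trans | exact: Tr0_conn | exact: Tr0_card].
by move=> Tr TS Co; apply: lower.
Qed.
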